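(* The generating function of $\alpha$-unimodal sets satisfies $$F(q,t,z):=\sum_{n\ge1}\sum_{\alpha\vDash n}\sum_{S\in U_\alpha} q^{|S|}\,t^{\ell(\alpha)}\,z^n = \frac{tz}{1-(1+q)(1+t)z+qz^2}$$ as formal power series.
   Context: A composition $\alpha=(\alpha_1,\dots,\alpha_\ell)$ of $n$ (written $\alpha\vDash n$) is a sequence of positive integers summing to $n$; $\ell(\alpha)=\ell$ is its number of parts. Set $S_\alpha=\{\alpha_1,\alpha_1+\alpha_2,\dots,\alpha_1+\dots+\alpha_{\ell-1}\}\subseteq[n-1]$. The blocks of $\alpha$ are $B_i(\alpha)=\{\alpha_1+\dots+\alpha_{i-1}+1,\dots,\alpha_1+\dots+\alpha_i\}$. A set $S\subseteq[n-1]$ is $\alpha$-unimodal if for every $i$ the set $S\cap(B_i(\alpha)\setminus S_\alpha)$ is an initial segment (in increasing order) of $B_i(\alpha)\setminus S_\alpha$. $U_\alpha$ denotes the set of $\alpha$-unimodal subsets of $[n-1]$. *)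

(* Defs.v *)
From HB Require Import structures.
From mathcomp Require Import all_boot all_order all_algebra.
Set Implicit Arguments. Unset Strict Implicit. Unset Printing Implicit Defensive.
Import GRing.Theory.
Local Open Scope ring_scope.

Definition is_composition (n : nat) (a : seq nat) : bool :=
  all (fun x => (0 < x)%N) a && (sumn a == n).

Definition partial_sums (a : seq nat) : seq nat :=
  [seq sumn (take i a) | i <- iota 1 (size a).-1].

(* Block B_(i+1)(alpha) (0-indexed i) = {a_1+..+a_i + 1, ..., a_1+..+a_(i+1)} *)
Definition in_block (a : seq nat) (i x : nat) : bool :=
  ((sumn (take i a) < x) && (x <= sumn (take i.+1 a)))%N.

Definition in_block_free (a : seq nat) (i x : nat) : bool :=
  in_block a i x && (x \notin partial_sums a).

(* S is alpha-unimodal: for every block, S ∩ (B_i \ S_alpha) is an initial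
   segment (in increasing order) of B_i \ S_alpha, i.e. it is downward closed
   within B_i \ S_alpha. All elements of blocks are <= sumn a. *)
Definition unimodal (a : seq nat) (S : pred nat) : bool :=
  all (fun i =>
    all (fun y =>
      all (fun x =>
        [&& (x < y)%N, in_block_free a i x, in_block_free a i y & S y] ==> S x)
      (iota 0 (sumn a).+1))
    (iota 0 (sumn a).+1))
  (iota 0 (size a)).

Definition natset (n : nat) (S : {set 'I_n}) : pred nat :=
  fun x => x \in [seq val i | i in S].

(* Subsets of [n-1] = {1,...,n-1}: sets of 'I_n = {0,...,n-1} avoiding 0. *)
Definition subset_of_range (n : nat) (S : {set 'I_n}) : bool :=
  S \subset [set i : 'I_n | (0 < val i)%N].

(* Coefficient of z^n in F(q,t,z):
   sum over compositions alpha of n (enumerated as tuples of length l <= n with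
   entries < n+1) and over alpha-unimodal S of q^|S| t^l(alpha). *)
Definition unimodal_coef (R : comRingType) (q t : R) (n : nat) : R :=
  \sum_(l < n.+1)
    \sum_(s : l.-tuple 'I_n.+1 | is_composition n (map val s))
      \sum_(S : {set 'I_n} | subset_of_range S && unimodal (map val s) (natset S))
        q ^+ #|S| * t ^+ l.

Definition unimodal_den (R : comRingType) (q t : R) : {poly R} :=
  1 - ((1 + q) * (1 + t)) *: 'X + q *: 'X^2.

(* Main.v *)
Require Import Defs.
From HB Require Import structures.
From mathcomp Require Import all_boot all_order all_algebra.
From mathcomp Require Import zify ring.
Set Implicit Arguments. Unset Strict Implicit. Unset Printing Implicit Defensive.

Definition inc_head (a : seq nat) := if a is k :: a' then k.+1 :: a' else [:: 1].
Fixpoint cwr (w : seq bool) : seq nat :=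
  if w is b :: w' then (if b then 1 :: cwr w' else inc_head (cwr w')) else [:: 1].
Fixpoint wc (a : seq nat) : seq bool :=
  match a with
  | [::] => [::]
  | [:: k] => nseq k.-1 false
  | k :: a' => nseq k.-1 false ++ true :: wc a'
  end.
Definition natv (v : seq bool) : pred nat := fun x => nth false (false :: v) x.

Lemma cwr_ne w : exists k a, cwr w = k.+1 :: a.
Proof.
elim: w => [|b w [k [a IH]]] /=; first by exists 0, [::].
by case: b; rewrite IH; [exists 0, (k.+1 :: a) | exists k.+1, a].
Qed.

Lemma sumn_cwr w : sumn (cwr w) = (size w).+1.
Proof.
elim: w => [|b w IH] //=; case: b => /=; first by rewrite IH.
by have [k [a E]] := cwr_ne w; move: IH; rewrite E /= => <-.
Qed.

Lemma size_cwr w : size (cwr w) = (count id w).+1.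
Proof.
elim: w => [|b w IH] //=; case: b => /=; first by rewrite IH.
by have [k [a E]] := cwr_ne w; move: IH; rewrite E /= => ->.
Qed.

Lemma pos_cwr w : all (fun x => 0 < x) (cwr w).
Proof.
elim: w => [|b w IH] //=; case: b => //=.
by have [k [a E]] := cwr_ne w; move: IH; rewrite E.
Qed.

Lemma cwrK : cancel cwr wc.
Proof.
elim => [|b w IH] //=; have [k [a E]] := cwr_ne w; rewrite E in IH.
case: b => /=; rewrite E /=; first by case: a E IH => [|y a] E /= ->.
by case: a E IH => [|y a] E /= <-.
Qed.

Lemma cwr_nseq j w k a : cwr w = k :: a -> cwr (nseq j false ++ w) = (j + k) :: a.
Proof. by move=> E; elim: j => [|j IH] //=; rewrite IH. Qed.

Lemma cwr_nseq0 j : cwr (nseq j false) = [:: j.+1].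
Proof. by elim: j => [|j IH] //=; rewrite IH. Qed.

Lemma wcK a : a != [::] -> all (fun x => 0 < x) a -> cwr (wc a) = a.
Proof.
elim: a => [|k a IH] // _ /= /andP[k0 pa].
case: a IH pa => [|y a] IH pa /=.
  by rewrite cwr_nseq0 prednK.
rewrite (@cwr_nseq k.-1 (true :: wc (y :: a)) 1 (y::a)) /=; first by rewrite addn1 prednK.
by rewrite IH.
Qed.

Lemma ps_cons k a : partial_sums (k :: a) = [seq k + sumn (take i a) | i <- iota 0 (size a)].
Proof.
rewrite /partial_sums /= -(addn0 1) iotaDl -map_comp; apply: eq_map => i /=.
by rewrite add0n.
Qed.

Lemma ps_cons2 k y a : partial_sums (k :: y :: a) = k :: map (addn k) (partial_sums (y :: a)).
Proof.
rewrite ps_cons /= addn0; congr (_ :: _).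
rewrite ps_cons -(addn0 1) iotaDl -!map_comp; apply: eq_map => i /=.
by rewrite add0n.
Qed.

Lemma ps_incr k a : partial_sums (k.+1 :: a) = map succn (partial_sums (k :: a)).
Proof. by rewrite !ps_cons -map_comp; apply: eq_map => i /=; rewrite addSn. Qed.

Lemma ps_cwr w x : (x \in partial_sums (cwr w)) = natv w x.
Proof.
elim: w x => [|b w IH] x; first by rewrite /natv /=; case: x => [|[]].
have [k [a E]] := cwr_ne w; rewrite /= E.
case: b.
  rewrite ps_cons2 -E in_cons /natv.
  case: x => [|[|x]] //=.
    by apply/mapP => -[y _].
  have := IH x.+1; rewrite /natv /= => <-.
  by rewrite -[x.+2]add1n (mem_map (@addnI 1)).
rewrite /= ps_incr -E /natv; case: x => [|x] /=.
  by apply/mapP => -[y _].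
by rewrite (mem_map succn_inj) IH.
Qed.

Lemma ps_mono (a : seq nat) i j : i <= j -> sumn (take i a) <= sumn (take j a).
Proof.
move=> lij; rewrite -(subnKC lij) takeD sumn_cat; exact: leq_addr.
Qed.

Lemma ps_step (a : seq nat) i : i < size a -> sumn (take i.+1 a) = sumn (take i a) + nth 0 a i.
Proof. by move=> h; rewrite (take_nth 0 h) sumn_rcons. Qed.

Lemma mem_ps (a : seq nat) x :
  reflect (exists2 j, 0 < j < size a & x = sumn (take j a)) (x \in partial_sums a).
Proof.
apply: (iffP mapP) => [[j]|[j hj ->]].
  by rewrite mem_iota => hj ->; exists j => //; move: hj; case: (size a) => [|s] /=; lia.
by exists j => //; rewrite mem_iota; move: hj; case: (size a) => [|s] /=; lia.
Qed.

Lemma block_exists (a : seq nat) x : 0 < x <= sumn a ->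
  exists2 i, i < size a & sumn (take i a) < x <= sumn (take i.+1 a).
Proof.
elim: a x => [|k a IH] x /=; first by lia.
move=> hx; case: (leqP x k) => hk.
  by exists 0 => //=; rewrite take0 /=; lia.
have [|i hi hb] := IH (x - k); first by lia.
by exists i.+1 => //=; lia.
Qed.

Lemma notPS (a : seq nat) i z : sumn (take i a) < z < sumn (take i.+1 a) ->
  z \notin partial_sums a.
Proof.
move=> hz; apply/negP => /mem_ps [j _ E].
case: (leqP j i) => hji.
  by have := ps_mono a hji; lia.
by have := ps_mono a hji; lia.
Qed.

Definition locb (a : seq nat) (S : pred nat) :=
  all (fun x => [&& x \notin partial_sums a, x.+1 \notin partial_sums a & S x.+1] ==> S x)
    (iota 1 (sumn a).-2).

Lemma unimodal_loc (a : seq nat) (S : pred nat) :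
  ~~ S (sumn a) -> unimodal a S = locb a S.
Proof.
move=> Sn; apply/idP/idP.
  move=> /allP U; apply/allP => x; rewrite mem_iota => hx.
  apply/implyP => /and3P[xn x1n Sx1].
  have [|i hi /andP[h1 h2]] := @block_exists a x; first by lia.
  have hx2 : x < sumn (take i.+1 a).
    rewrite ltn_neqAle h2 andbT; apply/eqP => E.
    case: (ltnP i.+1 (size a)) => hs.
      by move/negP: xn; apply; apply/mem_ps; exists i.+1.
    by move: E; rewrite take_oversize // => E; lia.
  have := U i; rewrite mem_iota add0n => /(_ hi) /allP /(_ x.+1).
  rewrite mem_iota => /(_ ltac:(lia)) /allP /(_ x); rewrite mem_iota => /(_ ltac:(lia)).
  by rewrite /in_block_free /in_block xn x1n Sx1 h1 h2 /=; move/implyP; apply; lia.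
move=> /allP L; apply/allP => i; rewrite mem_iota add0n => hi.
apply/allP => y _; apply/allP => x _; apply/implyP.
case/and4P => hxy /andP[/andP[bx1 bx2] fx] /andP[/andP[by1 by2] fy] Sy.
have yn : y < sumn a.
  rewrite ltn_neqAle; apply/andP; split.
    by apply/eqP => E; move: Sn; rewrite -E Sy.
  by apply: leq_trans by2 _; rewrite -{2}(take_size a); apply: ps_mono; lia.
suff H : forall k, k <= y - x -> S (y - k) by have := H (y - x) (leqnn _); rewrite subKn //; lia.
elim => [|k IH] hk; first by rewrite subn0.
have Sz1 : S (y - k).+1.-1 by rewrite /=; apply: IH; lia.
set z := y - k.+1.
have ez : (y - k) = z.+1 by rewrite /z; lia.
rewrite ez in Sz1.
have := L z; rewrite mem_iota => /(_ ltac:(lia)) /implyP; apply.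
rewrite Sz1 andbT; apply/andP; split.
  by apply: (notPS (i := i)); lia.
case: (ltnP z.+1 y) => hz.
  by apply: (notPS (i := i)); lia.
by have -> : z.+1 = y by lia.
Qed.

Import GRing.Theory.
Local Open Scope ring_scope.

Fixpoint allw (X : Type) (al : seq X) (m : nat) : seq (seq X) :=
  if m is m'.+1 then [seq x :: u | x <- al, u <- allw al m'] else [:: [::]].

Lemma big_allwS (R : comRingType) (X : Type) (al : seq X) m (F : seq X -> R) :
  \sum_(u <- allw al m.+1) F u = \sum_(x <- al) \sum_(u <- allw al m) F (x :: u).
Proof. by rewrite /= big_allpairs_dep. Qed.

Lemma big_allw0 (R : comRingType) (X : Type) (al : seq X) (F : seq X -> R) :
  \sum_(u <- allw al 0) F u = F [::].
Proof. by rewrite /= big_seq1. Qed.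

Lemma mem_allw (X : eqType) (al : seq X) m u :
  (u \in allw al m) = (size u == m) && all (mem al) u.
Proof.
elim: m u => [|m IH] [|x u] //=; rewrite ?inE //.
  by apply/allpairsPdep => -[y [v [_ _ //]]].
apply/allpairsPdep/idP.
  by case=> y [v [yal vin [-> ->]]]; move: vin; rewrite IH /= eqSS => /andP[-> ->]; rewrite yal.
by rewrite eqSS => /and3P[su xal au]; exists x, u; rewrite IH su au xal.
Qed.

Lemma uniq_allw (X : eqType) (al : seq X) m : uniq al -> uniq (allw al m).
Proof.
move=> ual; elim: m => [|m IH] //=.
apply: allpairs_uniq_dep => //.
by move=> [x1 u1] [x2 u2] _ _ /= [-> ->].
Qed.

Section Transfer.
Variables (R : comRingType) (q t : R).

Definition rL (x y : bool * bool) := ~~ ((x == (false,false)) && (y == (false,true))).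
Definition letters := [:: (true,true); (true,false); (false,true); (false,false)].
Definition wl (x : bool*bool) : R := (if x.1 then t else 1) * (if x.2 then q else 1).
Definition wt (u : seq (bool * bool)) := \prod_(y <- u) wl y.
Definition Aseq m := \sum_(u <- allw letters m) (if sorted rL u then wt u else 0).
Definition Bseq m := \sum_(u <- allw letters m) (if path rL (false,false) u then wt u else 0).

Lemma path_nff x u : x != (false,false) -> path rL x u = sorted rL u.
Proof. by move=> hx; case: u => //= y u; rewrite /rL (negbTE hx). Qed.

Lemma sum_path x m : x != (false,false) ->
  \sum_(u <- allw letters m) (if path rL x u then wt (x :: u) else 0) = wl x * Aseq m.
Proof.
move=> hx; rewrite /Aseq mulr_sumr; apply: eq_bigr => u _.
by rewrite path_nff // /wt big_cons; case: sorted; rewrite ?mulr0.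
Qed.

Lemma A_S m : Aseq m.+1 = (t*q+t+q) * Aseq m + Bseq m.
Proof.
rewrite {1}/Aseq big_allwS !big_cons big_nil /=.
rewrite (sum_path (x:=(true,true))) // (sum_path (x:=(true,false))) // (sum_path (x:=(false,true))) //.
have -> : \sum_(u <- allw letters m) (if path rL (false, false) u then wt ((false, false) :: u) else 0) = Bseq m.
  by apply: eq_bigr => u _; rewrite /wt big_cons /wl /= !mul1r.
rewrite /wl /=; ring.
Qed.

Lemma B_S m : Bseq m.+1 = (t*q+t) * Aseq m + Bseq m.
Proof.
rewrite {1}/Bseq big_allwS !big_cons big_nil /=.
idtac.
have -> : \sum_(u <- allw letters m) (if path rL (false, false) u then wt ((false, false) :: u) else 0) = Bseq m.
  by apply: eq_bigr => u _; rewrite /wt big_cons /wl /= !mul1r.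
rewrite big1_eq add0r.
rewrite (sum_path (x:=(true,true))) // (sum_path (x:=(true,false))) // /wl /=; idtac.
ring.
Qed.

Lemma A0 : Aseq 0 = 1.
Proof. by rewrite /Aseq big_allw0 /wt big_nil. Qed.
Lemma B0 : Bseq 0 = 1.
Proof. by rewrite /Bseq big_allw0 /wt big_nil. Qed.

Lemma A1 : Aseq 1 = (1+q)*(1+t).
Proof. rewrite A_S A0 B0; ring. Qed.

Lemma A_rec m : Aseq m.+2 = (1+q)*(1+t)*Aseq m.+1 - q * Aseq m.
Proof.
have h1 := A_S m.+1; have h2 := B_S m; have h3 := A_S m.
rewrite h1 h2.
have -> : Bseq m = Aseq m.+1 - (t*q+t+q) * Aseq m by rewrite h3; ring.
ring.
Qed.

End Transfer.

Local Close Scope ring_scope.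

Lemma locb_sorted m w v : size w = m -> size v = m ->
  locb (cwr w) (natv v) = sorted rL (zip w v).
Proof.
move=> sw sv; rewrite /locb sumn_cwr sw.
apply/allP/(sortedP (false,false)) => [H j hj|H x].
  rewrite size_zip sw sv minnn in hj.
  have := H j.+1; rewrite mem_iota => /(_ ltac:(lia)).
  rewrite !ps_cwr /natv /= !nth_zip ?sw ?sv // /rL /=.
  by case: (nth false w j); case: (nth false w j.+1); case: (nth false v j); case: (nth false v j.+1).
rewrite mem_iota => hx.
have := H x.-1; rewrite size_zip sw sv minnn => /(_ ltac:(lia)).
rewrite !ps_cwr /natv /= !nth_zip ?sw ?sv // /rL /=.
have -> : x = x.-1.+1 by lia.
rewrite /=.
by case: (nth false w x.-1); case: (nth false w x.-1.+1); case: (nth false v x.-1); case: (nth false v x.-1.+1).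
Qed.

Import GRing.Theory.
Local Open Scope ring_scope.

Definition phi m (S : {set 'I_m.+1}) : seq bool :=
  [seq (inord j.+1 : 'I_m.+1) \in S | j <- iota 0 m].

Lemma natsetE m (S : {set 'I_m.+1}) x :
  natset S x = (x < m.+1)%N && (inord x \in S).
Proof.
rewrite /natset; apply/imageP/andP => [[i iS ->]|[hx xS]].
  by rewrite ltn_ord inord_val.
by exists (inord x) => //; apply/esym/inordK.
Qed.

Lemma range0 m (S : {set 'I_m.+1}) : subset_of_range S -> (ord0 \in S) = false.
Proof. by move=> /subsetP H; apply/negP => /H; rewrite inE. Qed.

Lemma natset_phi m (S : {set 'I_m.+1}) : subset_of_range S -> natset S =1 natv (phi S).
Proof.
move=> hS x; rewrite natsetE /natv; case: x => [|x] /=.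
  have -> : (inord 0 : 'I_m.+1) = ord0 by apply: val_inj; exact: inordK.
  by rewrite range0.
case: (ltnP x m) => hx.
  by rewrite /phi (nth_map 0%N) ?size_iota // nth_iota // ltnS hx.
by rewrite nth_default ?size_map ?size_iota // ltnNge ltnS hx.
Qed.

Lemma inord0 m : (inord 0 : 'I_m.+1) = ord0.
Proof. by apply: val_inj; exact: inordK. Qed.

Lemma card_phi m (S : {set 'I_m.+1}) : subset_of_range S -> #|S| = count id (phi S).
Proof.
move=> hS.
have E : enum 'I_m.+1 = map inord (iota 0 m.+1).
  rewrite -val_enum_ord -map_comp -{1}(map_id (enum 'I_m.+1)); apply: eq_map => i /=.
  by rewrite inord_val.
rewrite cardE /enum_mem size_filter -enumT E count_map /phi count_map.
rewrite /= /preim /= inord0 range0 // add0n -(addn0 1%N) iotaDl count_map.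
by apply: eq_count => j.
Qed.

Lemma set_sum (R : comRingType) m (H : pred nat -> nat -> R) :
  (forall f g k, f =1 g -> H f k = H g k) ->
  \sum_(S : {set 'I_m.+1} | subset_of_range S) H (natset S) #|S| =
  \sum_(v <- allw [:: true; false] m) H (natv v) (count id v).
Proof.
move=> Hext; rewrite -big_filter.
rewrite (eq_big_seq (fun S => H (natv (phi S)) (count id (phi S)))); last first.
  by move=> S; rewrite mem_filter => /andP[hS _]; rewrite card_phi // (Hext _ _ _ (natset_phi hS)).
rewrite -(big_map (@phi m) xpredT (fun v => H (natv v) (count id v))).
apply: perm_big; apply: uniq_perm.
- rewrite map_inj_in_uniq ?filter_uniq ?index_enum_uniq //.
  move=> S1 S2; rewrite !mem_filter => /andP[h1 _] /andP[h2 _] E; apply/setP => i.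
  case: i => [[|j] hj].
    by rewrite (_ : Ordinal hj = ord0) ?range0 //; apply: val_inj.
  have := congr1 (fun s => nth false s j) E; rewrite /phi !(nth_map 0%N) ?size_iota ?nth_iota //.
  by rewrite (_ : inord j.+1 = Ordinal hj) //; apply: val_inj; exact: inordK.
- exact: uniq_allw.
move=> v; rewrite mem_allw; apply/mapP/idP.
  move=> [S _ ->]; rewrite size_map size_iota eqxx /=.
  by apply/allP => b _; case: b.
move=> /andP[/eqP sv _]; exists [set i : 'I_m.+1 | natv v i].
  rewrite mem_filter mem_index_enum andbT; apply/subsetP => i; rewrite !inE.
  by case: i => [[|j] hj].
apply: (@eq_from_nth _ false); rewrite ?size_map ?size_iota // => j hj.
rewrite /phi (nth_map 0%N) ?size_iota -?sv // nth_iota -?sv // inE /natv /= inordK //.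
Qed.

Lemma comp_pos n a : is_composition n a -> all (fun x => 0 < x)%N a.
Proof. by case/andP. Qed.

Lemma comp_sumn n a : is_composition n a -> sumn a = n.
Proof. by case/andP => _ /eqP. Qed.

Lemma size_le_sumn a : all (fun x => 0 < x)%N a -> (size a <= sumn a)%N.
Proof. by elim: a => //= x a IH /andP[hx ha]; have := IH ha; lia. Qed.

Lemma mem_le_sumn a x : x \in a -> (x <= sumn a)%N.
Proof. by elim: a => //= y a IH; rewrite in_cons => /orP[/eqP ->|/IH]; lia. Qed.

Lemma map_val_inord n a : (forall x, x \in a -> x < n.+1)%N ->
  map val (map (@inord n) a) = a.
Proof.
elim: a => //= x a IH H; rewrite inordK ?H ?mem_head // IH // => y ya.
by apply: H; rewrite in_cons ya orbT.
Qed.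

Lemma mem_cwr_allw m a :
  (a \in map cwr (allw [:: true; false] m)) = is_composition m.+1 a.
Proof.
apply/mapP/idP => [[w win ->]|ca].
  move: win; rewrite mem_allw => /andP[/eqP sw _].
  by rewrite /is_composition pos_cwr sumn_cwr sw eqxx.
have an : a != [::] by case: a ca => //; rewrite /is_composition.
have E := wcK an (comp_pos ca).
exists (wc a) => //; rewrite mem_allw; apply/andP; split.
  by have := sumn_cwr (wc a); rewrite E (comp_sumn ca) => -[->].
by apply/allP => b _; case: b.
Qed.

Section CompSum.
Variables (R : comRingType) (m : nat).

Definition Tl (l : 'I_m.+2) : seq (seq nat) :=
  [seq a <- map (fun s : l.-tuple 'I_m.+2 => map val (tval s)) (index_enum (l.-tuple 'I_m.+2)) | is_composition m.+1 a].

Lemma size_Tl l a : a \in Tl l -> size a = l.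
Proof. by rewrite mem_filter => /andP[_ /mapP[s _ ->]]; rewrite size_map size_tuple. Qed.

Lemma mem_CL a :
  (a \in [seq a | l <- index_enum 'I_m.+2, a <- Tl l]) = is_composition m.+1 a.
Proof.
apply/allpairsPdep/idP => [[l [a' [_ ha' ->]]]|ca].
  by move: ha'; rewrite mem_filter => /andP[].
have hs : (size a < m.+2)%N by have := size_le_sumn (comp_pos ca); rewrite (comp_sumn ca).
exists (Ordinal hs), a; split => //; first exact: mem_index_enum.
rewrite mem_filter ca /=; apply/mapP.
have st : size (map (@inord m.+1) a) == size a by rewrite size_map.
exists (Tuple st); first exact: mem_index_enum.
rewrite /= map_val_inord // => x xa; rewrite ltnS -(comp_sumn ca); exact: mem_le_sumn.
Qed.

Lemma comp_sum (G : seq nat -> R) :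
  \sum_(l < m.+2) \sum_(s : l.-tuple 'I_m.+2 | is_composition m.+1 (map val s)) G (map val s) =
  \sum_(w <- allw [:: true; false] m) G (cwr w).
Proof.
transitivity (\sum_(l < m.+2) \sum_(a <- Tl l) G a).
  by apply: eq_bigr => l _; rewrite big_filter big_map.
rewrite -(big_allpairs_dep (h := fun (_ : 'I_m.+2) (a : seq nat) => a)).
rewrite -(big_map cwr xpredT G); apply: perm_big; apply: uniq_perm.
- apply: allpairs_uniq_dep.
  + exact: index_enum_uniq.
  + move=> l _; rewrite filter_uniq // map_inj_uniq ?index_enum_uniq //.
    by move=> s1 s2 /(inj_map val_inj) E; apply: val_inj.
  + move=> p1 p2 /allpairsPdep[l1 [a1 [_ h1 ->]]] /allpairsPdep[l2 [a2 [_ h2 ->]]] /= E.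
    subst a2; have El : l1 = l2 by apply: val_inj; rewrite /= -(size_Tl h1) -(size_Tl h2).
    by subst l2.
- by rewrite map_inj_uniq ?uniq_allw //; exact: can_inj cwrK.
by move=> a; rewrite mem_CL mem_cwr_allw.
Qed.
End CompSum.

Lemma zip_sum (R : comRingType) m (F : seq (bool*bool) -> R) :
  \sum_(w <- allw [:: true; false] m) \sum_(v <- allw [:: true; false] m) F (zip w v) =
  \sum_(u <- allw letters m) F u.
Proof.
elim: m F => [|m IH] F; first by rewrite !big_allw0.
have E : forall b, \sum_(w <- allw [:: true; false] m)
     \sum_(v <- allw [:: true; false] m.+1) F (zip (b :: w) v) =
   \sum_(u <- allw letters m) F ((b,true)::u) + \sum_(u <- allw letters m) F ((b,false)::u).
  move=> b; rewrite -(IH (fun u => F ((b,true)::u))) -(IH (fun u => F ((b,false)::u))) -big_split.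
  by apply: eq_bigr => w _; rewrite big_allwS !big_cons big_nil addr0.
rewrite [LHS]big_allwS !big_cons big_nil !E [RHS]big_allwS !big_cons big_nil.
by rewrite !addr0 !addrA.
Qed.

Lemma wt_zip (R : comRingType) (q t : R) w v : size w = size v ->
  q ^+ count id v * t ^+ count id w = wt q t (zip w v).
Proof.
elim: w v => [|b w IH] [|c v] //=; first by rewrite /wt big_nil mulr1.
move=> [/IH E]; rewrite /wt big_cons -/(wt q t (zip w v)) -E /wl /=.
by case: b; case: c; rewrite /= ?add1n ?add0n ?exprS; ring.
Qed.

Lemma unimodal_ext a (f g : pred nat) : f =1 g -> unimodal a f = unimodal a g.
Proof.
move=> E; rewrite /unimodal; apply: eq_all => i; apply: eq_all => y; apply: eq_all => x.
by rewrite !E.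
Qed.

Lemma coef_eq (R : comRingType) (q t : R) m : unimodal_coef q t m.+1 = t * Aseq q t m.
Proof.
pose Gf a := \sum_(S : {set 'I_m.+1} | subset_of_range S)
   (if unimodal a (natset S) then q ^+ #|S| * t ^+ size a else 0).
rewrite /unimodal_coef.
transitivity (\sum_(l < m.+2) \sum_(s : l.-tuple 'I_m.+2 | is_composition m.+1 (map val s)) Gf (map val s)).
  apply: eq_bigr => l _; apply: eq_bigr => s _; rewrite /Gf big_mkcondr /=.
  by apply: eq_bigr => S _; rewrite size_map size_tuple.
rewrite comp_sum.
transitivity (\sum_(w <- allw [:: true; false] m) \sum_(v <- allw [:: true; false] m)
   (if sorted rL (zip w v) then t * wt q t (zip w v) else 0)).
  apply: eq_big_seq => w; rewrite mem_allw => /andP[/eqP sw _].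
  rewrite /Gf; etransitivity.
    apply: (@set_sum _ m (fun f k => if unimodal (cwr w) f then q ^+ k * t ^+ size (cwr w) else 0)).
    by move=> f g k E; rewrite (unimodal_ext _ E).
  apply: eq_big_seq => v; rewrite mem_allw => /andP[/eqP sv _].
  rewrite unimodal_loc; last by rewrite sumn_cwr /natv /= nth_default ?sw ?sv.
  rewrite (locb_sorted sw sv) size_cwr; case: sorted => //.
  by rewrite exprS mulrCA wt_zip // sw sv.
rewrite (@zip_sum _ m (fun u => if sorted rL u then t * wt q t u else 0)) /Aseq mulr_sumr.
by apply: eq_bigr => u _; case: sorted; rewrite ?mulr0.
Qed.



Lemma coefP (R : comRingType) (c : nat -> R) N j :
  (\sum_(1 <= n < N.+1) c n *: 'X^n)`_j = if (0 < j <= N)%N then c j else 0.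
Proof.
rewrite coef_sum.
under eq_bigr do rewrite coefZ coefXn.
case: ifP => hj.
  rewrite (bigD1_seq j) /= ?iota_uniq ?mem_iota //; last by lia.
  rewrite eqxx mulr1 big1 ?addr0 // => n /negbTE; rewrite eq_sym => ->; exact: mulr0.
rewrite big1_seq // => n; rewrite mem_iota => hn.
have -> : (j == n) = false by apply/negbTE/eqP => E; subst; lia.
exact: mulr0.
Qed.

Unset Implicit Arguments.
Theorem proposition2p1 (R : comRingType) (q t : R) (N k : nat) :
  (k <= N)%N ->
  (unimodal_den q t * \sum_(1 <= n < N.+1) unimodal_coef q t n *: 'X^n)`_k
  = (t *: 'X)`_k.
Proof.
move=> hk; rewrite /unimodal_den mulrDl mulrBl mul1r -!scalerAl coefD coefB !coefZ coefXM coefXnM coefX !coefP.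
case: k hk => [|[|[|m]]] hk /=.
- by rewrite !mulr0 subr0 addr0.
- rewrite hk coef_eq A0 !mulr0 subr0 addr0 !mulr1 //.
- rewrite hk (ltnW hk) !coef_eq A0 A1 !mulr0 addr0; ring.
rewrite hk (ltnW hk) (_ : (m.+3 - 2 <= N)%N = true); last by lia.
rewrite (_ : (m.+3 - 2)%N = m.+1); last by lia.
rewrite !coef_eq A_rec; ring.
Qed.
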